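(* Let $R$ be a ring. Every t.i.b.s. right $R$-module is subinjective extension-reflecting.
   Context: For right $R$-modules $X,Y$, $X\in \underline{\mathfrak{In}}^{-1}(Y)$ means: for every module $C$ containing $X$ as a submodule, every homomorphism $X\to Y$ extends to $C\to Y$. A module $M$ is a t.i.b.s. module (test module for injectivity by subinjectivity) if $M\in \underline{\mathfrak{In}}^{-1}(N)$ implies that $N$ is injective. $M$ is subinjective extension-reflecting if for every short exact sequence $0\to A\to B\to C\to 0$, $M\in \underline{\mathfrak{In}}^{-1}(A)\cap \underline{\mathfrak{In}}^{-1}(C)$ implies $M\in \underline{\mathfrak{In}}^{-1}(B)$. *)

(* Defs.v *)
From HB Require Import structures.
From mathcomp Require Import all_boot all_algebra.
Set Implicit Arguments. Unset Strict Implicit. Unset Printing Implicit Defensive.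
Import GRing.Theory.
Local Open Scope ring_scope.

(* Right R-modules are modelled as left modules over the converse ring R^c. *)
Notation rmodType R := (lmodType (GRing.converse R)).

Section Defs.
Variable R : pzRingType.

Definition is_hom (X Y : rmodType R) (f : X -> Y) : Prop :=
  forall (a : GRing.converse R) (x y : X), f (a *: x + y) = a *: f x + f y.

(* X \in In^{-1}(Y): for every module C containing X as a submodule
   (i.e. every monomorphism i : X -> C), every hom X -> Y extends to C. *)
Definition subinj (X Y : rmodType R) : Prop :=
  forall (C : rmodType R) (i : X -> C), is_hom i -> injective i ->
  forall f : X -> Y, is_hom f ->
  exists g : C -> Y, is_hom g /\ forall x, g (i x) = f x.

Definition injective_module (N : rmodType R) : Prop :=
  forall (A B : rmodType R) (i : A -> B), is_hom i -> injective i ->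
  forall f : A -> N, is_hom f ->
  exists g : B -> N, is_hom g /\ forall a, g (i a) = f a.

Definition tibs (M : rmodType R) : Prop :=
  forall N : rmodType R, subinj M N -> injective_module N.

Definition short_exact (A B C : rmodType R) (f : A -> B) (g : B -> C) : Prop :=
  [/\ is_hom f, is_hom g, injective f, (forall c, exists b, g b = c) &
      (forall b, g b = 0 <-> exists a, f a = b)].

Definition subinj_ext_reflecting (M : rmodType R) : Prop :=
  forall (A B C : rmodType R) (f : A -> B) (g : B -> C), short_exact f g ->
  subinj M A -> subinj M C -> subinj M B.
End Defs.

(* Main.v *)
Require Import Defs.
From mathcomp Require Import all_boot all_algebra.
From Stdlib Require Import IndefiniteDescription.
Import GRing.Theory.
Local Open Scope ring_scope.

Section H.
Context {R : pzRingType}.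

Lemma homD {X Y : rmodType R} {f : X -> Y} : is_hom f -> forall x y, f (x + y) = f x + f y.
Proof. by move=> hf x y; have := hf 1 x y; rewrite !scale1r. Qed.

Lemma hom0 {X Y : rmodType R} {f : X -> Y} : is_hom f -> f 0 = 0.
Proof.
move=> hf; apply: (@addrI _ (f 0)); by rewrite addr0 -(homD hf) addr0.
Qed.

Lemma homZ {X Y : rmodType R} {f : X -> Y} : is_hom f -> forall a x, f (a *: x) = a *: f x.
Proof. move=> hf a x; have := hf a x 0; rewrite (hom0 hf) !addr0; exact. Qed.

Lemma homN {X Y : rmodType R} {f : X -> Y} : is_hom f -> forall x, f (- x) = - f x.
Proof. by move=> hf x; rewrite -scaleN1r homZ // scaleN1r. Qed.

Lemma homB {X Y : rmodType R} {f : X -> Y} : is_hom f -> forall x y, f (x - y) = f x - f y.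
Proof. by move=> hf x y; rewrite homD // homN. Qed.
End H.

Theorem mainTheorem17 (R : pzRingType) (M : rmodType R) :
  tibs M -> subinj_ext_reflecting M.
Proof.
move=> tM A B C f g [hf hg injf surj ex] sA sC.
have injA := tM A sA.
have [p [hp pf]] : exists p : B -> A, is_hom p /\ forall a, p (f a) = a.
  exact: (injA A B f hf injf id).
pose s (c : C) : B := let b0 := proj1_sig (constructive_indefinite_description _ (surj c)) in b0 - f (p b0).
have sE : forall b, s (g b) = b - f (p b).
  move=> b; rewrite /s; case: (constructive_indefinite_description _ _) => b0 /= e.
  have : g (b0 - b) = 0 by rewrite (homB hg) e subrr.
  case/ex => a fa.
  apply/eqP; rewrite -subr_eq0.
  have -> : b0 - f (p b0) - (b - f (p b)) = (b0 - b) - f (p (b0 - b)).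
    rewrite (homB hp) (homB hf) !opprB addrACA [RHS]addrACA; congr (_ + _).
    exact: addrC.
  by rewrite -fa pf subrr.
clearbody s.
have hs : is_hom s.
  move=> a c c'; have [b <-] := surj c; have [b' <-] := surj c'.
  by rewrite -(homZ hg) -(homD hg) !sE (homD hp) (homZ hp) (homD hf) (homZ hf) scalerBr opprD addrACA.
move=> C' i hi inji h hh.
have [k1 [hk1 ek1]] := sA C' i hi inji (p \o h) (ltac:(move=> a x y; by rewrite /= hh hp)).
have [k2 [hk2 ek2]] := sC C' i hi inji (g \o h) (ltac:(move=> a x y; by rewrite /= hh hg)).
exists (fun x => f (k1 x) + s (k2 x)); split.
  by move=> a x y; rewrite hk1 hk2 hf hs scalerDr addrACA.
by move=> x; rewrite ek1 ek2 /= sE addrC subrK.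
Qed.
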